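(* Let $\mathbb{K}$ be an infinite field, $n\in\mathbb{N}$, and $G\subseteq\mathrm{GL}_n(\mathbb{K})$ a subgroup endowed with a topology making it a topological group. If $G$ has an open subgroup which is soluble (resp. nilpotent), then $G$ has an open normal subgroup which is soluble (resp. nilpotent). *)

(* Defs.v *)
(* matrices over a field; GL_n(K) is infinite, so groups are
   represented as Prop-valued subsets of 'M[K]_n, not as finGroupTypes. *)
From HB Require Import structures.
From mathcomp Require Import all_boot all_order all_algebra.
Set Implicit Arguments. Unset Strict Implicit. Unset Printing Implicit Defensive.
Import GRing.Theory.
Local Open Scope ring_scope.

Section GLDefs.
Variables (K : fieldType) (n : nat).

Definition mset := 'M[K]_n -> Prop.

Definition msubset (A B : mset) : Prop := forall x, A x -> B x.

Definition is_subgroup (A : mset) : Prop :=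
  [/\ A 1%:M,
      (forall x, A x -> x \in unitmx),
      (forall x y, A x -> A y -> A (x *m y)) &
      (forall x, A x -> A (invmx x))].

Definition is_normal (N G : mset) : Prop :=
  forall g x, G g -> N x -> N (invmx g *m x *m g).

Definition mcomm (x y : 'M[K]_n) : 'M[K]_n := invmx x *m invmx y *m x *m y.

Definition gen_subgroup (S : mset) : mset :=
  fun x => forall H, is_subgroup H -> msubset S H -> H x.

Definition comm_subgroup (A B : mset) : mset :=
  gen_subgroup (fun z => exists a b, [/\ A a, B b & z = mcomm a b]).

Fixpoint derived (H : mset) (k : nat) : mset :=
  if k is k'.+1 then comm_subgroup (derived H k') (derived H k') else H.

Fixpoint lower_central (H : mset) (k : nat) : mset :=
  if k is k'.+1 then comm_subgroup (lower_central H k') H else H.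

Definition soluble (H : mset) : Prop :=
  exists k, forall x, derived H k x -> x = 1%:M.

Definition nilpotent (H : mset) : Prop :=
  exists k, forall x, lower_central H k x -> x = 1%:M.

Definition is_topology (G : mset) (op : mset -> Prop) : Prop :=
  [/\ (forall U, op U -> msubset U G),
      op G,
      (forall F : mset -> Prop, (forall U, F U -> op U) ->
          op (fun x => exists2 U, F U & U x)) &
      (forall U V, op U -> op V -> op (fun x => U x /\ V x))].

(* G is a subgroup of GL_n(K) and op a topology on G making it a topological
   group: multiplication G x G -> G (product topology) and inversion are
   continuous. *)
Definition is_topological_group (G : mset) (op : mset -> Prop) : Prop :=
  [/\ is_subgroup G,
      is_topology G op,
      (forall U x y, op U -> G x -> G y -> U (x *m y) ->
         exists V W, [/\ op V, op W, V x, W y &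
           forall v w, V v -> W w -> U (v *m w)]) &
      (forall U, op U -> op (fun x => G x /\ U (invmx x)))].

Definition open_subgroup (G : mset) (op : mset -> Prop) (H : mset) : Prop :=
  [/\ is_subgroup H, msubset H G & op H].

End GLDefs.

(* Main.v *)
Require Import Defs.
From HB Require Import structures.
From mathcomp Require Import all_boot all_order all_algebra.
From mathcomp Require Import zify.
From Stdlib Require Import Classical FunctionalExtensionality PropExtensionality.
Set Implicit Arguments. Unset Strict Implicit. Unset Printing Implicit Defensive.
Import GRing.Theory.
Local Open Scope ring_scope.

Section Poly.
Variables (K : fieldType) (n : nat).
Local Notation M := 'M[K]_n.
Local Notation isU x := (x \in unitmx).
Local Notation J := (option (bool * 'I_n * 'I_n)).

Lemma invmxM' (a b : M) : isU a -> isU b -> invmx (a *m b) = invmx b *m invmx a.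
Proof.
move=> ua ub.
have uab : isU (a *m b) by rewrite unitmx_mul ua.
rewrite -[LHS]mulmx1.
have <- : (a *m b) *m (invmx b *m invmx a) = 1%:M.
  by rewrite mulmxA -(mulmxA a) mulmxV // mulmx1 mulmxV.
by rewrite mulmxA mulVmx // mul1mx.
Qed.

Definition coord (x : M) (j : J) : K :=
  match j with None => 1 | Some (b, i, k) => if b then invmx x i k else x i k end.

Fixpoint pdeg (d : nat) (f : M -> K) : Prop :=
  match d with
  | 0 => exists c, forall x, isU x -> f x = c
  | d'.+1 => exists g : J -> M -> K, (forall j, pdeg d' (g j)) /\
              forall x, isU x -> f x = \sum_j g j x * coord x j
  end.

Lemma pdeg_ext d f f' : pdeg d f -> (forall x, isU x -> f x = f' x) -> pdeg d f'.
Proof.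
case: d => [|d] /=.
  by case=> c Ec E; exists c => x ux; rewrite -E // Ec.
by case=> g [Hg Ef] E; exists g; split=> // x ux; rewrite -E // Ef.
Qed.

Lemma pdeg_const d c : pdeg d (fun _ => c).
Proof.
elim: d c => [|d IH] c /=; first by exists c.
exists (fun j _ => if j is None then c else 0); split.
  by case=> [?|] /=; apply: IH.
move=> x _; rewrite (bigD1 None) //= big1 ?addr0 ?mulr1 //.
by case=> // ? _; rewrite mul0r.
Qed.

Lemma pdeg_add d f g : pdeg d f -> pdeg d g -> pdeg d (fun x => f x + g x).
Proof.
elim: d f g => [|d IH] f g /=.
  by case=> c1 E1 [c2 E2]; exists (c1 + c2) => x ux; rewrite E1 ?E2.
case=> g1 [H1 E1] [g2 [H2 E2]].
exists (fun j x => g1 j x + g2 j x); split=> [j|x ux]; first exact: IH.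
rewrite E1 // E2 // -big_split /=; apply: eq_bigr => j _; by rewrite mulrDl.
Qed.

Lemma pdeg_scale d a f : pdeg d f -> pdeg d (fun x => a * f x).
Proof.
elim: d f => [|d IH] f /=.
  by case=> c E; exists (a * c) => x ux; rewrite E.
case=> g [H E]; exists (fun j x => a * g j x); split=> [j|x ux]; first exact: IH.
rewrite E // mulr_sumr; apply: eq_bigr => j _; by rewrite mulrA.
Qed.

Lemma pdeg_sum_seq d (I : Type) (r : seq I) (F : I -> M -> K) :
  (forall i, pdeg d (F i)) -> pdeg d (fun x => \sum_(i <- r) F i x).
Proof.
move=> HF; elim: r => [|i r IH].
  by apply: pdeg_ext (pdeg_const d 0) _ => x _; rewrite big_nil.
by apply: pdeg_ext (pdeg_add (HF i) IH) _ => x _; rewrite big_cons.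
Qed.

Lemma pdeg_sum d (I : finType) (F : I -> M -> K) :
  (forall i, pdeg d (F i)) -> pdeg d (fun x => \sum_i F i x).
Proof. exact: pdeg_sum_seq. Qed.

Lemma pdeg_mono d f : pdeg d f -> pdeg d.+1 f.
Proof.
move=> Hf; exists (fun j => if j is None then f else (fun _ => 0)); split.
  by case=> [?|] //=; apply: pdeg_const.
move=> x _; rewrite (bigD1 None) //= big1 ?addr0 ?mulr1 //.
by case=> // ? _; rewrite mul0r.
Qed.

Lemma pdeg_le d e f : (d <= e)%N -> pdeg d f -> pdeg e f.
Proof.
elim: e => [|e IH]; first by rewrite leqn0 => /eqP ->.
rewrite leq_eqVlt => /orP [/eqP -> //| lt] Hf.
by apply: pdeg_mono; apply: IH.
Qed.

Lemma pdeg_mul d e f g : pdeg d f -> pdeg e g -> pdeg (d + e) (fun x => f x * g x).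
Proof.
move=> Hf; elim: e g => [|e IH] g /=.
  case=> c Eg; rewrite addn0; apply: pdeg_ext (pdeg_scale c Hf) _ => x ux.
  by rewrite Eg // mulrC.
case=> h [Hh Eh]; rewrite addnS /=.
exists (fun j x => f x * h j x); split=> [j|x ux]; first exact: IH.
rewrite Eh // mulr_sumr; apply: eq_bigr => j _; by rewrite mulrA.
Qed.

Lemma pdeg_coord j0 : pdeg 1 (fun x => coord x j0).
Proof.
exists (fun j _ => if j == j0 then 1 else 0); split=> [j|x _] /=.
  by exists (if j == j0 then 1 else 0).
rewrite (bigD1 j0) //= eqxx mul1r big1 ?addr0 // => j /negbTE ->.
by rewrite mul0r.
Qed.

Definition polymap e (F : M -> M) :=
  (forall x, isU x -> isU (F x)) /\ forall j, pdeg e (fun x => coord (F x) j).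

Lemma pdeg_comp d e f F : pdeg d f -> polymap e F -> pdeg (d * e) (fun x => f (F x)).
Proof.
move=> Hf [uF pF]; elim: d f Hf => [|d IH] f /=.
  by case=> c Ec; exists c => x ux; rewrite Ec // uF.
case=> g [Hg Ef]; rewrite mulSn addnC.
have : pdeg (d * e + e) (fun x => \sum_j g j (F x) * coord (F x) j).
  by apply: pdeg_sum => j; apply: pdeg_mul; [apply: IH|apply: pF].
by move/pdeg_ext; apply=> x ux; rewrite Ef // uF.
Qed.

Lemma pdeg_entry (A B : M) i k : pdeg 1 (fun x => (A *m x *m B) i k).
Proof.
have : pdeg 1 (fun x => \sum_q B q k * \sum_p A i p * coord x (Some (false, p, q))).
  apply: pdeg_sum => q; apply: pdeg_scale; apply: pdeg_sum => p; apply: pdeg_scale.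
  exact: pdeg_coord.
move/pdeg_ext; apply=> x _; rewrite !mxE; apply: eq_bigr => q _.
by rewrite mxE mulrC.
Qed.

Lemma pdeg_entry_inv (A B : M) i k : pdeg 1 (fun x => (A *m invmx x *m B) i k).
Proof.
have : pdeg 1 (fun x => \sum_q B q k * \sum_p A i p * coord x (Some (true, p, q))).
  apply: pdeg_sum => q; apply: pdeg_scale; apply: pdeg_sum => p; apply: pdeg_scale.
  exact: pdeg_coord.
move/pdeg_ext; apply=> x _; rewrite !mxE; apply: eq_bigr => q _.
by rewrite mxE mulrC.
Qed.

Lemma pdeg_quad (A B C : M) i k :
  pdeg 2 (fun x => (A *m invmx x *m B *m x *m C) i k).
Proof.
have : pdeg 2 (fun x => \sum_q C q k *
   \sum_p (A *m invmx x *m B) i p * coord x (Some (false, p, q))).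
  apply: pdeg_sum => q; apply: pdeg_scale; apply: pdeg_sum => p.
  exact: (pdeg_mul (pdeg_entry_inv A B i p) (pdeg_coord _)).
move/pdeg_ext; apply=> x _; rewrite !mxE; apply: eq_bigr => q _.
by rewrite mxE mulrC.
Qed.

Lemma polymap_mul (a b : M) : isU a -> isU b -> polymap 1 (fun x => a *m x *m b).
Proof.
move=> ua ub; split=> [x ux|]; first by rewrite !unitmx_mul ua ux ub.
case=> [[[[] i] k]|]; last exact: pdeg_const.
  apply: pdeg_ext (pdeg_entry_inv (invmx b) (invmx a) i k) _ => x ux.
  by rewrite /coord invmxM' ?unitmx_mul ?ua // invmxM' // mulmxA.
by apply: pdeg_ext (pdeg_entry a b i k) _.
Qed.

Lemma polymap_inv : polymap 1 (@invmx K n).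
Proof.
split=> [x ux|]; first by rewrite unitmx_inv.
case=> [[[[] i] k]|]; last exact: pdeg_const.
  by apply: pdeg_ext (pdeg_coord (Some (false, i, k))) _ => x _; rewrite /coord invmxK.
by apply: pdeg_ext (pdeg_coord (Some (true, i, k))) _.
Qed.

Lemma polymap_quad F :
  (forall x, isU x -> isU (F x)) ->
  (exists A B C, forall x, isU x -> F x = A *m invmx x *m B *m x *m C) ->
  (exists A B C, forall x, isU x -> invmx (F x) = A *m invmx x *m B *m x *m C) ->
  polymap 2 F.
Proof.
move=> uF [A [B [C E]]] [A' [B' [C' E']]]; split=> //.
case=> [[[[] i] k]|]; last exact: pdeg_const.
  by apply: pdeg_ext (pdeg_quad A' B' C' i k) _ => x ux; rewrite /coord E'.
by apply: pdeg_ext (pdeg_quad A B C i k) _ => x ux; rewrite /coord E.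
Qed.


Definition cl d (A : mset K n) : mset K n :=
  fun x => isU x /\ forall f, pdeg d f -> (forall a, A a -> f a = 0) -> f x = 0.

Lemma cl_sub d (A : mset K n) : (forall a, A a -> isU a) -> msubset A (cl d A).
Proof. by move=> uA x Ax; split=> [|f _ fA]; [exact: uA | exact: fA]. Qed.

Lemma cl_monoS d (A B : mset K n) : msubset A B -> msubset (cl d A) (cl d B).
Proof.
move=> AB x [ux hx]; split=> // f pf fB; apply: hx pf _ => a Aa; exact/fB/AB.
Qed.

Lemma cl_monoD d e (A : mset K n) : (d <= e)%N -> msubset (cl e A) (cl d A).
Proof.
move=> de x [ux hx]; split=> // f pf fA; apply: hx (pdeg_le de pf) fA.
Qed.

Lemma cl_map d e (A B : mset K n) F : polymap e F ->
  (forall a, A a -> cl d B (F a)) -> forall x, cl (d * e) A x -> cl d B (F x).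
Proof.
move=> [uF pF] hAB x [ux hx]; split; first exact: uF.
move=> f pf fB; apply: (hx (fun y => f (F y))); first exact: pdeg_comp.
by move=> a Aa; have [_ ->] := hAB a Aa.
Qed.

Lemma cl_map1 d (A B : mset K n) F : polymap 1 F ->
  (forall a, A a -> cl d B (F a)) -> forall x, cl d A x -> cl d B (F x).
Proof. by move=> pF hAB x; rewrite -{1}[d]muln1; apply: cl_map pF hAB x. Qed.

Lemma cl_subgroup d (A : mset K n) : is_subgroup A -> is_subgroup (cl d A).
Proof.
case=> A1 Au Am Ai; have sA := cl_sub d Au.
have h1 : forall a z, A a -> cl d A z -> cl d A (a *m z).
  move=> a z Aa Cz.
  have := cl_map1 (polymap_mul (Au a Aa) (unitmx1 _ _)) _ Cz; rewrite mulmx1; apply.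
  by move=> a' Aa'; rewrite mulmx1; apply/sA/Am.
split; [exact: sA| by move=> x [] | |].
  move=> x y Cx Cy.
  have := cl_map1 (polymap_mul (unitmx1 _ _) Cy.1) _ Cx; rewrite mul1mx; apply.
  by move=> a Aa; rewrite mul1mx; apply: h1.
move=> x Cx; apply: (cl_map1 (@polymap_inv) _ Cx) => a Aa; exact/sA/Ai.
Qed.

Definition unitset : mset K n := fun x => isU x.

Lemma unitset_sg : is_subgroup unitset.
Proof.
split; rewrite /unitset ?unitmx1 // => x y; first by rewrite unitmx_mul => -> ->.
by rewrite unitmx_inv.
Qed.

Lemma gen_subgroup_sg (S : mset K n) : (forall x, S x -> isU x) ->
  is_subgroup (gen_subgroup S).
Proof.
move=> uS; split.
- by move=> H [H1 _ _ _] _.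
- by move=> x Hx; apply: (Hx unitset unitset_sg).
- by move=> x y Hx Hy H sH SH; case: (sH) => _ _ Hm _; apply: Hm; [apply: Hx|apply: Hy].
- by move=> x Hx H sH SH; case: (sH) => _ _ _ Hi; apply: Hi; apply: Hx.
Qed.

Lemma gen_subgroup_min (S H : mset K n) : is_subgroup H -> msubset S H ->
  msubset (gen_subgroup S) H.
Proof. by move=> sH SH x Hx; apply: Hx. Qed.

Lemma gen_subgroup_mono (S T : mset K n) : msubset S T ->
  msubset (gen_subgroup S) (gen_subgroup T).
Proof. by move=> ST x Hx H sH TH; apply: Hx => // y Sy; apply/TH/ST. Qed.

Lemma comm_subgroup_mono (A A' B B' : mset K n) : msubset A A' -> msubset B B' ->
  msubset (comm_subgroup A B) (comm_subgroup A' B').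
Proof.
move=> AA BB; apply: gen_subgroup_mono => z [a [b [Aa Bb ->]]].
by exists a, b; split; [apply: AA | apply: BB |].
Qed.

Lemma mcomm_unit (a b : M) : isU a -> isU b -> isU (mcomm a b).
Proof. by move=> ua ub; rewrite /mcomm !unitmx_mul !unitmx_inv ua ub. Qed.

Lemma comm_subgroup_sg (A B : mset K n) : (forall a, A a -> isU a) ->
  (forall b, B b -> isU b) -> is_subgroup (comm_subgroup A B).
Proof.
move=> uA uB; apply: gen_subgroup_sg => z [a [b [Aa Bb ->]]].
exact: mcomm_unit (uA a Aa) (uB b Bb).
Qed.

Lemma polymap_comm_r (a : M) : isU a -> polymap 2 (fun y => mcomm a y).
Proof.
move=> ua; apply: polymap_quad.
- by move=> x ux; apply: mcomm_unit.
- by exists (invmx a), a, 1%:M => x _; rewrite /mcomm mulmx1.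
exists 1%:M, (invmx a), a => x ux.
rewrite /mcomm mul1mx invmxM' ?unitmx_mul ?unitmx_inv ?ua ?ux //.
rewrite invmxM' ?unitmx_mul ?unitmx_inv ?ua ?ux // invmxM' ?unitmx_inv ?ua ?ux //.
by rewrite !invmxK !mulmxA.
Qed.

Lemma polymap_comm_l (b : M) : isU b -> polymap 2 (fun x => mcomm x b).
Proof.
move=> ub; apply: polymap_quad.
- by move=> x ux; apply: mcomm_unit.
- by exists 1%:M, (invmx b), b => x _; rewrite /mcomm mul1mx.
exists (invmx b), b, 1%:M => x ux.
rewrite /mcomm mulmx1 invmxM' ?unitmx_mul ?unitmx_inv ?ub ?ux //.
rewrite invmxM' ?unitmx_mul ?unitmx_inv ?ub ?ux // invmxM' ?unitmx_inv ?ub ?ux //.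
by rewrite !invmxK !mulmxA.
Qed.

Lemma cl_comm d (A B : mset K n) : is_subgroup A -> is_subgroup B ->
  msubset (comm_subgroup (cl (d * 2) A) (cl (d * 2) B)) (cl d (comm_subgroup A B)).
Proof.
move=> sA sB; case: (sA) => _ uA _ _; case: (sB) => _ uB _ _.
have sC := comm_subgroup_sg uA uB.
have sCl := cl_subgroup d sC.
case: (sC) => _ uC _ _.
apply: gen_subgroup_min => // z [a [b [Ca Cb ->]]].
have step1 : forall a0, A a0 -> forall y, cl (d * 2) B y -> cl d (comm_subgroup A B) (mcomm a0 y).
  move=> a0 Aa0; apply: cl_map (polymap_comm_r (uA a0 Aa0)) _ => b0 Bb0.
  apply: cl_sub => //; move=> H sH SH; apply: SH; by exists a0, b0.
apply: (cl_map (polymap_comm_l Cb.1)) _ a Ca => a0 Aa0; exact: step1.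
Qed.

Lemma derived_sg (H : mset K n) k : is_subgroup H -> is_subgroup (derived H k).
Proof.
move=> sH; elim: k => [|k [_ u _ _]] //=; exact: comm_subgroup_sg.
Qed.

Lemma lower_sg (H : mset K n) k : is_subgroup H -> is_subgroup (lower_central H k).
Proof.
move=> sH; case: (sH) => _ uH _ _; elim: k => [|k [_ u _ _]] //=; exact: comm_subgroup_sg.
Qed.

Lemma derived_mono (A B : mset K n) k : msubset A B -> msubset (derived A k) (derived B k).
Proof. by move=> AB; elim: k => [|k IH] //=; apply: comm_subgroup_mono. Qed.

Lemma lower_mono (A B : mset K n) k : msubset A B ->
  msubset (lower_central A k) (lower_central B k).
Proof. by move=> AB; elim: k => [|k IH] //=; apply: comm_subgroup_mono. Qed.

Lemma derived_cl (H : mset K n) k d : is_subgroup H ->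
  msubset (derived (cl (d * 2 ^ k) H) k) (cl d (derived H k)).
Proof.
move=> sH; elim: k d => [|k IH] d /=; first by rewrite expn0 muln1.
move=> x; have -> : (d * 2 ^ k.+1 = d * 2 * 2 ^ k)%N by rewrite expnS mulnA.
move=> Hx; apply: (cl_comm (derived_sg k sH) (derived_sg k sH)).
exact: comm_subgroup_mono (IH (d * 2)%N) (IH (d * 2)%N) _ Hx.
Qed.

Lemma lower_cl (H : mset K n) k d : is_subgroup H ->
  msubset (lower_central (cl (d * 2 ^ k) H) k) (cl d (lower_central H k)).
Proof.
move=> sH; elim: k d => [|k IH] d /=; first by rewrite expn0 muln1.
move=> x; have -> : (d * 2 ^ k.+1 = d * 2 * 2 ^ k)%N by rewrite expnS mulnA.
move=> Hx; apply: (cl_comm (lower_sg k sH) sH).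
apply: comm_subgroup_mono (IH (d * 2)%N) _ _ Hx.
by apply: cl_monoD; rewrite leq_pmulr // expn_gt0.
Qed.

Lemma cl1_trivial (S : mset K n) : msubset S (fun x => x = 1%:M) ->
  msubset (cl 1 S) (fun x => x = 1%:M).
Proof.
move=> hS x [ux hx]; apply/matrixP => i k.
have pf : pdeg 1 (fun y : M => coord y (Some (false, i, k)) + - (1%:M : M) i k).
  exact: pdeg_add (pdeg_coord _) (pdeg_const _ _).
have h := hx _ pf; apply/eqP; rewrite -subr_eq0; apply/eqP; apply: h.
by move=> a /hS ->; rewrite /coord subrr.
Qed.

Lemma fdim d : exists (I : finType) (b : I -> M -> K), forall f, pdeg d f ->
  exists c : I -> K, forall x, isU x -> f x = \sum_i c i * b i x.
Proof.
elim: d => [|d [I [b Hb]]].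
  exists 'I_1, (fun _ _ => 1) => f [c Ec]; exists (fun _ => c) => x ux.
  by rewrite big_ord1 mulr1 Ec.
exists (prod J I), (fun p x => b p.2 x * coord x p.1) => f [g [Hg Ef]].
have [c Hc] := fin_all_exists (fun j => Hb _ (Hg j)).
exists (fun p => c p.1 p.2) => x ux.
rewrite Ef // -(pair_bigA _ (fun j i => c j i * (b i x * coord x j))) /=.
apply: eq_bigr => j _.
rewrite Hc // mulr_suml; apply: eq_bigr => i _; by rewrite mulrA.
Qed.

Lemma span_fin (I : finType) (b : I -> M -> K) (X : Type) (x0 : X) (P : X -> Prop)
  (phi : X -> M -> K)
  (rep : forall p, P p -> exists c : I -> K, forall x, isU x -> phi p x = \sum_i c i * b i x) :
  exists (r : nat) (ps : nat -> X), (forall i, (i < r)%N -> P (ps i)) /\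
    forall p, P p -> forall x, isU x -> (forall i, (i < r)%N -> phi (ps i) x = 0) ->
      phi p x = 0.
Proof.
pose d0 : X * (I -> K) := (x0, fun _ => 0).
pose repok p (c : I -> K) := forall x, isU x -> phi p x = \sum_i c i * b i x.
pose good (t : seq (X * (I -> K))) := forall r, (r < size t)%N ->
  P (nth d0 t r).1 /\ repok (nth d0 t r).1 (nth d0 t r).2.
pose Amat (t : seq (X * (I -> K))) : 'M[K]_(size t, #|I|) :=
  \matrix_(r, k) (nth d0 t r).2 (enum_val k).
pose rowv (c : I -> K) : 'rV[K]_#|I| := \row_k c (enum_val k).
have claim : forall m t, good t -> (#|I| - \rank (Amat t) <= m)%N ->
    exists t', good t' /\ forall p c, P p -> repok p c -> (rowv c <= Amat t')%MS.
  elim=> [|m IH] t gt hm.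
    exists t; split=> // p c _ _; apply: submx_full.
    by rewrite /row_full eqn_leq rank_leq_col /= -subn_eq0 -leqn0.
  case: (classic (forall p c, P p -> repok p c -> (rowv c <= Amat t)%MS)) => [all|].
    by exists t.
  move=> nall.
  have [p np] := not_all_ex_not _ _ nall.
  have [c nc] := not_all_ex_not _ _ np.
  have [Pp nc2] := imply_to_and _ _ nc.
  have [rpc nsub] := imply_to_and _ _ nc2.
  pose t2 := (p, c) :: t.
  have gt2 : good t2 by case=> [|r] //= lt; apply: gt.
  have sub1 : (Amat t <= Amat t2)%MS.
    apply/row_subP => r.
    have -> : row r (Amat t) = row (lift ord0 r) (Amat t2).
      by apply/rowP => k; rewrite !mxE lift0.
    exact: row_sub.
  have sub2 : (rowv c <= Amat t2)%MS.
    have -> : rowv c = row ord0 (Amat t2) by apply/rowP => k; rewrite !mxE.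
    exact: row_sub.
  have lt : (\rank (Amat t) < \rank (Amat t2))%N.
    apply: rank_ltmx; rewrite ltmxE sub1 /=; apply/negP => sub3.
    by apply: nsub; exact: submx_trans sub2 sub3.
  apply: (IH t2 gt2).
  have := rank_leq_col (Amat t2); lia.
have [t' [gt' span]] := claim #|I| [::] (fun r (lt : (r < 0)%N) => False_ind _ (notF lt)) (leq_subr _ _).
exists (size t'), (fun i => (nth d0 t' i).1); split=> [i lt|p Pp x ux hz].
  by have [] := gt' i lt.
have [c rc] := rep p Pp.
have /submxP [D eD] := span p c Pp rc.
rewrite rc //.
have ec : forall i, c i = \sum_(r < size t') D 0 r * (nth d0 t' r).2 i.
  move=> i; have := congr1 (fun v : 'rV_#|I| => v 0 (enum_rank i)) eD.
  by rewrite /= !mxE enum_rankK => ->; apply: eq_bigr => r _; rewrite mxE enum_rankK.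
under eq_bigr => i _ do rewrite ec mulr_suml.
rewrite exchange_big /= big1 // => r _.
have [_ rr] := gt' r (ltn_ord r).
rewrite -(eq_bigr _ (fun i _ => mulrA _ _ _)) -mulr_sumr -rr //.
by rewrite hz ?mulr0 // ltn_ord.
Qed.

Lemma op_ext (op : mset K n -> Prop) (A B : mset K n) : op A -> (forall x, A x <-> B x) -> op B.
Proof.
move=> oA AB; have -> : B = A; last by [].
by apply: functional_extensionality => x; apply: propositional_extensionality; split; apply AB.
Qed.

Section Top.
Variables (G : mset K n) (op : mset K n -> Prop).
Hypothesis HG : is_topological_group G op.

Lemma op_left U g : op U -> G g -> op (fun y => G y /\ U (g *m y)).
Proof.
case: HG => sG [opsub opG opU opI] cont _ oU Gg.
set L := fun y => G y /\ U (g *m y).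
have : op (fun z => exists2 W, (op W /\ msubset W L) & W z).
  by apply: opU => W [].
move=> oo; apply: (op_ext oo) => z; split; first by case=> W [_ WL] Wz; exact: WL.
move=> [Gz Ugz]; have [V [W [oV oW Vg Wz VW]]] := cont U g z oU Gg Gz Ugz.
exists W => //; split=> // w Ww; split; [exact: opsub W oW w Ww | exact: VW].
Qed.

Lemma op_right U g : op U -> G g -> op (fun y => G y /\ U (y *m g)).
Proof.
case: HG => sG [opsub opG opU opI] cont _ oU Gg.
set L := fun y => G y /\ U (y *m g).
have : op (fun z => exists2 W, (op W /\ msubset W L) & W z).
  by apply: opU => W [].
move=> oo; apply: (op_ext oo) => z; split; first by case=> W [_ WL] Wz; exact: WL.
move=> [Gz Ugz]; have [V [W [oV oW Vz Wg VW]]] := cont U z g oU Gz Gg Ugz.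
exists V => //; split=> // w Vw; split; [exact: opsub V oV w Vw | exact: VW].
Qed.

Lemma op_conj H g : op H -> G g -> op (fun x => G x /\ H (invmx g *m x *m g)).
Proof.
case: (HG) => [[G1 Gu Gm Gi] _ _ _] oH Gg.
have o1 := op_right oH Gg.
have o2 := op_left o1 (Gi _ Gg).
apply: (op_ext o2) => x; split; first by case=> Gx [_ h].
by case=> Gx h; split=> //; split=> //; apply: Gm => //; apply: Gi.
Qed.

Lemma op_inter H (r : nat) (gs : nat -> M) : (forall i, (i < r)%N -> G (gs i)) -> op H ->
  op (fun x => G x /\ forall i, (i < r)%N -> H (invmx (gs i) *m x *m gs i)).
Proof.
case: (HG) => _ [opsub opG opU opI] _ _ Ggs oH.
elim: r Ggs => [|r IH] Ggs.
  by apply: (op_ext opG) => x; split=> [Gx|[]//]; split.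
have o1 := IH (fun i lt => Ggs i (ltnW lt)).
have o2 := op_conj oH (Ggs r (ltnSn r)).
apply: (op_ext (opI _ _ o1 o2)) => x; split.
  case=> [[Gx hx] [_ hr]]; split=> // i; rewrite ltnS leq_eqVlt => /orP [/eqP -> //|].
  exact: hx.
case=> Gx hx; split; [split=> // i lt; apply: hx; exact: ltnW | split=> //; apply: hx; exact: ltnSn].
Qed.

Lemma op_subgroup (N U : mset K n) : is_subgroup N -> msubset N G -> op U -> U 1%:M ->
  msubset U N -> op N.
Proof.
case: (HG) => [[G1 Gu Gm Gi] [opsub opG opU opI] _ _].
case=> N1 Nu Nm Ni NG oU U1 UN.
pose F := fun V : mset K n => exists x, N x /\ V = (fun y => G y /\ U (invmx x *m y)).
have : op (fun y => exists2 V, F V & V y).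
  apply: opU => V [x [Nx ->]]; apply: op_left oU _; exact/Gi/NG.
move=> oo; apply: (op_ext oo) => y; split.
  case=> V [x [Nx ->]] [Gy Uy].
  have := Nm _ _ Nx (UN _ Uy); by rewrite mulmxA mulmxV ?mul1mx //; apply: Nu.
move=> Ny; exists (fun y' => G y' /\ U (invmx y *m y')); first by exists y.
by split; [exact: NG | rewrite mulVmx //; apply: Nu].
Qed.

End Top.

Lemma conj_mul (g x y : M) : isU g ->
  invmx g *m (x *m y) *m g = (invmx g *m x *m g) *m (invmx g *m y *m g).
Proof. by move=> ug; rewrite !mulmxA mulmxK. Qed.

Lemma conj_inv (g x : M) : isU g -> isU x ->
  invmx (invmx g *m x *m g) = invmx g *m invmx x *m g.
Proof.
move=> ug ux; rewrite invmxM' ?unitmx_mul ?unitmx_inv ?ug ?ux //.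
by rewrite invmxM' ?unitmx_inv ?ug ?ux // invmxK mulmxA.
Qed.

Lemma conj_conj (g g' x : M) : isU g -> isU g' ->
  invmx g' *m (invmx g *m x *m g) *m g' = invmx (g *m g') *m x *m (g *m g').
Proof. by move=> ug ug'; rewrite invmxM' // !mulmxA. Qed.

Lemma normal_core (G : mset K n) op (HG : is_topological_group G op) (H : mset K n) D :
  open_subgroup G op H ->
  exists N, [/\ open_subgroup G op N, is_normal N G & msubset N (cl D H)].
Proof.
move=> [sH HG' oH]; case: (HG) => sG _ _ _.
case: (sG) => G1 Gu Gm Gi; case: (sH) => H1 Hu Hm Hi.
have [I [b Hb]] := fdim D.
pose P := fun q : M * (M -> K) => [/\ G q.1, pdeg D q.2 & forall h, H h -> q.2 h = 0].
pose phi := fun (q : M * (M -> K)) (x : M) => q.2 (invmx q.1 *m x *m q.1).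
have rep : forall q, P q -> exists c : I -> K, forall x, isU x -> phi q x = \sum_i c i * b i x.
  move=> [g f] [/= Gg pf _]; apply: Hb.
  have := pdeg_comp pf (@polymap_mul (invmx g) g _ _); rewrite muln1; apply.
    by rewrite unitmx_inv; apply: Gu.
  exact: Gu.
have [r [ps [Pps Hspan]]] := span_fin (1%:M, fun _ => 0) rep.
pose N := fun x => G x /\ forall g, G g -> cl D H (invmx g *m x *m g).
have conj1 : forall g, G g -> invmx g *m 1%:M *m g = 1%:M.
  by move=> g Gg; rewrite mulmx1 mulVmx //; apply: Gu.
have sCl := cl_subgroup D sH.
case: (sCl) => C1 Cu Cm Ci.
have sN : is_subgroup N.
  split.
  - by split=> // g Gg; rewrite conj1.
  - by move=> x [Gx _]; apply: Gu.
  - move=> x y [Gx Nx] [Gy Ny]; split; first exact: Gm.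
    by move=> g Gg; rewrite conj_mul; [apply: Cm; [apply: Nx|apply: Ny] | apply: Gu].
  - move=> x [Gx Nx]; split; first exact: Gi.
    by move=> g Gg; rewrite -conj_inv; [apply: Ci; apply: Nx | apply: Gu | apply: Gu].
exists N; split.
- split=> //; first by move=> x [].
  pose U := fun x => G x /\ forall i, (i < r)%N -> H (invmx (ps i).1 *m x *m (ps i).1).
  apply: (op_subgroup HG (U := U)) => //.
  + by move=> x [].
  + apply: (op_inter HG (gs := fun i => (ps i).1)) => // i lt; by have [] := Pps i lt.
  + split=> // i lt; have [Gg _ _] := Pps i lt; by rewrite conj1.
  + move=> x [Gx HU]; split=> // g Gg; split.
      by rewrite !unitmx_mul unitmx_inv !Gu.
    move=> f pf fH.
    apply: (Hspan (g, f)) => //; first exact: Gu.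
    move=> i lt; have [_ _ h] := Pps i lt; apply: h; exact: HU.
- move=> g x Gg [Gx Nx]; split; first exact: (Gm _ _ (Gm _ _ (Gi _ Gg) Gx) Gg).
  by move=> g' Gg'; rewrite conj_conj; [apply: Nx; apply: Gm | apply: Gu | apply: Gu].
- move=> x [Gx Nx]; have := Nx _ G1; by rewrite invmx1 mul1mx mulmx1.
Qed.
End Poly.

Theorem lemma1p4 (K : fieldType) (Kinf : forall s : seq K, exists x, x \notin s)
  (n : nat) (G : mset K n) (op : mset K n -> Prop)
  (HG : is_topological_group G op) :
  ((exists H, open_subgroup G op H /\ soluble H) ->
     exists N, [/\ open_subgroup G op N, is_normal N G & soluble N]) /\
  ((exists H, open_subgroup G op H /\ nilpotent H) ->
     exists N, [/\ open_subgroup G op N, is_normal N G & nilpotent N]).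
Proof.
split.
  case=> H [oH [k sol]]; have [N [oN nN sN]] := normal_core HG (2 ^ k) oH.
  exists N; split=> //; exists k => x Dx.
  case: oH => sH _ _.
  have h := derived_cl (k:=k) (d:=1) sH; rewrite mul1n in h.
  exact: (cl1_trivial sol (h _ (derived_mono (k:=k) sN Dx))).
case=> H [oH [k nil]]; have [N [oN nN sN]] := normal_core HG (2 ^ k) oH.
exists N; split=> //; exists k => x Dx.
case: oH => sH _ _.
have h := lower_cl (k:=k) (d:=1) sH; rewrite mul1n in h.
exact: (cl1_trivial nil (h _ (lower_mono (k:=k) sN Dx))).
Qed.
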